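(* Let $a\in\mathbb{N}_0$ and $b\notin\mathbb{Z}$, and let $\rho(x;a,b)$ be the unique quasi-rational antiderivative of $(1-x)^a(1+x)^b$ belonging to $(1+x)^{b+1}\mathcal{Q}_\pm$. Then $\rho(1;a,b)=\nu(a,b)$, where $\nu(a,b)=2^{1+a+b}\frac{\Gamma(a+1)\Gamma(b+1)}{\Gamma(a+b+2)}$.
   Context: $\mathcal{Q}_\pm$ is the set of rational functions regular at $x=1$ and $x=-1$. A function is quasi-rational if its logarithmic derivative is rational. *)

(* Defs.v *)
From Stdlib Require Import Reals ZArith List.
From Coquelicot Require Import Coquelicot.
Open Scope R_scope.

Fixpoint peval (p : list R) (x : R) : R :=
  match p with
  | nil => 0
  | c :: p' => c + x * peval p' x
  end.

Definition Gamma_pos (x : R) : R :=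
  RInt_gen (fun t => Rpower t (x - 1) * exp (- t)) (at_right 0) (Rbar_locally p_infty).

(* Gamma function on all reals (meaningful off the non-positive integers), by the
   standard continuation  Gamma x = Gamma (x+n) / (x (x+1) ... (x+n-1))  with n
   chosen so that x + n > 0. *)
Definition Gamma (x : R) : R :=
  let n := Z.to_nat (up (Rabs x)) in
  Gamma_pos (x + INR n) / fold_right Rmult 1 (map (fun k => x + INR k) (seq 0 n)).

Definition nu (a : nat) (b : R) : R :=
  Rpower 2 (1 + INR a + b) * Gamma (INR a + 1) * Gamma (b + 1) / Gamma (INR a + b + 2).

(* The candidate function rho(x) = (1+x)^(b+1) * P(x)/Q(x), an element of
   (1+x)^(b+1) Q_pm when Q(1) <> 0 and Q(-1) <> 0. *)
Definition rho_of (P Q : list R) (b x : R) : R :=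
  Rpower (1 + x) (b + 1) * (peval P x / peval Q x).

Definition antideriv_rep (a : nat) (b : R) (P Q : list R) : Prop :=
  peval Q 1 <> 0 /\ peval Q (-1) <> 0 /\
  forall x : R, -1 < x < 1 -> peval Q x <> 0 ->
    is_derive (rho_of P Q b) x ((1 - x) ^ a * Rpower (1 + x) b).

(* Main.v *)
Require Import Defs.
From Stdlib Require Import Reals ZArith List Lra Lia Classical FunctionalExtensionality.
From Coquelicot Require Import Coquelicot.
Open Scope R_scope.


Fixpoint padd (p q : list R) : list R :=
  match p, q with
  | nil, _ => q
  | _, nil => p
  | a :: p', b :: q' => (a + b) :: padd p' q'
  end.

Lemma padd_ok p q x : peval (padd p q) x = peval p x + peval q x.
Proof.
  revert q; induction p as [|a p IH]; intros [|b q]; simpl; try ring.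
  rewrite IH; ring.
Qed.

Fixpoint pscal (c : R) (p : list R) := match p with nil => nil | a :: p' => c * a :: pscal c p' end.

Lemma pscal_ok c p x : peval (pscal c p) x = c * peval p x.
Proof. induction p; simpl; [ring|]. rewrite IHp; ring. Qed.

Fixpoint pmul (p q : list R) : list R :=
  match p with
  | nil => nil
  | a :: p' => padd (pscal a q) (0 :: pmul p' q)
  end.

Lemma pmul_ok p q x : peval (pmul p q) x = peval p x * peval q x.
Proof.
  induction p as [|a p IH]; simpl; [ring|].
  rewrite padd_ok, pscal_ok; simpl; rewrite IH; ring.
Qed.

Definition is_poly (f : R -> R) := exists l, forall x, f x = peval l x.

Lemma is_poly_const c : is_poly (fun _ => c).
Proof. exists (c :: nil); intros; simpl; ring. Qed.
Lemma is_poly_id : is_poly (fun x => x).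
Proof. exists (0 :: 1 :: nil); intros; simpl; ring. Qed.
Lemma is_poly_plus f g : is_poly f -> is_poly g -> is_poly (fun x => f x + g x).
Proof. intros [l Hl] [m Hm]; exists (padd l m); intros; rewrite padd_ok, Hl, Hm; auto. Qed.
Lemma is_poly_mult f g : is_poly f -> is_poly g -> is_poly (fun x => f x * g x).
Proof. intros [l Hl] [m Hm]; exists (pmul l m); intros; rewrite pmul_ok, Hl, Hm; auto. Qed.
Lemma is_poly_pow f n : is_poly f -> is_poly (fun x => f x ^ n).
Proof.
  intros Hf; induction n; simpl.
  - apply is_poly_const.
  - apply is_poly_mult; auto.
Qed.
Lemma is_poly_ext f g : (forall x, f x = g x) -> is_poly f -> is_poly g.
Proof. intros H [l Hl]; exists l; intros; rewrite <- H; auto. Qed.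

Lemma peval_continuous p x : continuous (peval p) x.
Proof.
  induction p as [|a p IH]; simpl.
  - apply continuous_const.
  - apply (continuous_plus (fun _ => a) (fun y => y * peval p y)).
    apply continuous_const.
    apply (continuous_mult (fun y => y) (peval p)); auto. apply continuous_id.
Qed.

Fixpoint quo (c : R) (p : list R) : list R :=
  match p with
  | nil => nil
  | a :: p' => match p' with nil => nil | _ => peval p' c :: quo c p' end
  end.

Lemma quo_ok c p x : peval p x = peval p c + (x - c) * peval (quo c p) x.
Proof.
  induction p as [|a p IH]; [simpl; ring|].
  destruct p as [|b p]; [simpl; ring|].
  change (peval (a :: b :: p) x) with (a + x * peval (b :: p) x).
  change (peval (a :: b :: p) c) with (a + c * peval (b :: p) c).
  change (quo c (a :: b :: p)) with (peval (b :: p) c :: quo c (b :: p)).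
  change (peval (peval (b :: p) c :: quo c (b :: p)) x) with
    (peval (b :: p) c + x * peval (quo c (b :: p)) x).
  rewrite IH at 1. ring.
Qed.

Lemma quo_length c a p : length (quo c (a :: p)) = length p.
Proof.
  revert a; induction p as [|b p IH]; intros a; [reflexivity|].
  change (length (peval (b :: p) c :: quo c (b :: p)) = S (length p)).
  rewrite <- (IH b). reflexivity.
Qed.

Lemma poly_zero_interval_aux n : forall p, (length p <= n)%nat ->
  forall c d, c < d -> (forall x, c < x < d -> peval p x = 0) -> forall x, peval p x = 0.
Proof.
  induction n as [|n IH]; intros p Hl c d Hcd H x.
  - destruct p; simpl in *; [auto| lia].
  - destruct p as [|a p]; [simpl; auto|].
    set (c0 := (c + d) / 2).
    assert (Hc0 : peval (a :: p) c0 = 0) by (apply H; unfold c0; lra).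
    assert (E : forall y, peval (a :: p) y = (y - c0) * peval (quo c0 (a :: p)) y).
    { intro y. rewrite (quo_ok c0 (a :: p) y), Hc0. ring. }
    assert (Hq : forall y, c < y < c0 -> peval (quo c0 (a :: p)) y = 0).
    { intros y Hy. assert (H1 := H y ltac:(unfold c0 in *; lra)).
      rewrite E in H1. apply Rmult_integral in H1. destruct H1; [lra|auto]. }
    rewrite E, (IH (quo c0 (a :: p))) with (c := c) (d := c0); try ring.
    + rewrite quo_length; simpl in Hl; lia.
    + unfold c0; lra.
    + auto.
Qed.

Lemma poly_zero_interval p c d : c < d -> (forall x, c < x < d -> peval p x = 0) -> forall x, peval p x = 0.
Proof. intros; eapply poly_zero_interval_aux; eauto. Qed.

Lemma lim_mult {T} (F : (T -> Prop) -> Prop) {FF : Filter F} (f g : T -> R) l1 l2 :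
  filterlim f F (locally l1) -> filterlim g F (locally l2) ->
  filterlim (fun x => f x * g x) F (locally (l1 * l2)).
Proof.
  intros H1 H2. apply (filterlim_comp_2 f g Rmult H1 H2).
  apply (filterlim_mult (K := R_AbsRing) l1 l2).
Qed.

Lemma lim_cont_right (f : R -> R) x : continuous f x -> filterlim f (at_right x) (locally (f x)).
Proof. intros H. eapply filterlim_filter_le_1; [apply filter_le_within|exact H]. Qed.

Lemma ev_right x d P : 0 < d -> (forall y, x < y < x + d -> P y) -> at_right x P.
Proof.
  intros Hd H. exists (mkposreal d Hd). intros y Hy Hxy. apply H.
  unfold ball in Hy; simpl in Hy; unfold AbsRing_ball, abs, minus, plus, opp in Hy; simpl in Hy.
  apply Rabs_lt_between in Hy. lra.
Qed.

Lemma lim_unique_right x (f g : R -> R) l1 l2 :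
  at_right x (fun y => f y = g y) ->
  filterlim f (at_right x) (locally l1) -> filterlim g (at_right x) (locally l2) -> l1 = l2.
Proof.
  intros He H1 H2. apply (filterlim_ext_loc _ _ He) in H1.
  apply (filterlim_locally_unique (F := at_right x) g l1 l2); auto.

Qed.

Lemma Rpower_pos x y : 0 < Rpower x y.
Proof. unfold Rpower; apply exp_pos. Qed.

Lemma lim_Rpower0 e : 0 < e -> filterlim (fun x => Rpower (1 + x) e) (at_right (-1)) (locally 0).
Proof.
  intros He. apply filterlim_locally. intros eps.
  set (d := Rpower eps (/ e)).
  assert (Hd : 0 < d) by apply Rpower_pos.
  apply (ev_right _ d); auto. intros y Hy.
  unfold ball; simpl; unfold AbsRing_ball, abs, minus, plus, opp; simpl.
  rewrite Ropp_0, Rplus_0_r, Rabs_pos_eq by (left; apply Rpower_pos).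
  replace (pos eps) with (Rpower d e).
  apply Rlt_Rpower_l; lra.
  unfold d. rewrite Rpower_mult. rewrite Rinv_l by lra.
  apply Rpower_1. apply cond_pos.
Qed.

Lemma lim_mult_r x (f g : R -> R) l1 l2 :
  filterlim f (at_right x) (locally l1) -> filterlim g (at_right x) (locally l2) ->
  filterlim (fun x => f x * g x) (at_right x) (locally (l1 * l2)).
Proof. apply lim_mult. apply at_right_proper_filter. Qed.

Lemma lim_const_r x (c : R) : filterlim (fun _ => c) (at_right x) (locally c).
Proof. apply filterlim_const. Qed.

Lemma nonrat_aux n : forall N, (length N <= n)%nat -> forall e C d Q,
  (forall z, e <> IZR z) -> 0 < d -> peval Q (-1) <> 0 ->
  (forall x, -1 < x < -1 + d -> peval N x = C * Rpower (1 + x) e * peval Q x) -> C = 0.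
Proof.
  induction n as [|n IH]; intros N Hl e C d Q He Hd HQ H.
  -
    destruct N; [|simpl in Hl; lia].
    assert (L : C * peval Q (-1) = 0).
    { symmetry. apply (lim_unique_right (-1) (fun _ => 0) (fun x => C * peval Q x)).
      - apply (ev_right _ d _ Hd). intros y Hy. specialize (H y Hy). simpl in H. symmetry in H.
        assert (Rpower (1 + y) e <> 0) by (apply Rgt_not_eq, Rpower_pos).
        apply Rmult_integral in H. destruct H as [H|H]; [|rewrite H; ring].
        apply Rmult_integral in H. destruct H as [H|H]; [rewrite H; ring|tauto].
      - apply lim_const_r.
      - apply lim_mult_r. apply lim_const_r. apply lim_cont_right, peval_continuous. }
    apply Rmult_integral in L; destruct L; tauto.
  - destruct (Rlt_or_le e 0) as [Hneg|Hpos].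
    + assert (L : C * peval Q (-1) = 0 * peval N (-1)).
      { apply (lim_unique_right (-1) (fun x => C * peval Q x) (fun x => Rpower (1 + x) (- e) * peval N x)).
        - apply (ev_right _ d _ Hd). intros y Hy. rewrite (H y Hy).
          transitivity (C * peval Q y * (Rpower (1 + y) (-e) * Rpower (1 + y) e)).
          + rewrite <- Rpower_plus. replace (-e + e) with 0 by ring.
            rewrite Rpower_O by lra. ring.
          + ring.
        - apply lim_mult_r. apply lim_const_r. apply lim_cont_right, peval_continuous.
        - apply lim_mult_r. apply lim_Rpower0; lra. apply lim_cont_right, peval_continuous. }
      rewrite Rmult_0_l in L. apply Rmult_integral in L; destruct L; tauto.
    + assert (Hpos' : 0 < e) by (destruct Hpos; auto; subst; elim (He 0%Z); reflexivity).
      destruct N as [|a N'].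
      {
        assert (L : C * peval Q (-1) = 0).
        { symmetry. apply (lim_unique_right (-1) (fun _ => 0) (fun x => C * peval Q x)).
          - apply (ev_right _ d _ Hd). intros y Hy. specialize (H y Hy). simpl in H. symmetry in H.
            assert (Rpower (1 + y) e <> 0) by (apply Rgt_not_eq, Rpower_pos).
            apply Rmult_integral in H. destruct H as [H|H]; [|rewrite H; ring].
            apply Rmult_integral in H. destruct H as [H|H]; [rewrite H; ring|tauto].
          - apply lim_const_r.
          - apply lim_mult_r. apply lim_const_r. apply lim_cont_right, peval_continuous. }
        apply Rmult_integral in L; destruct L; tauto. }
      assert (HN0 : peval (a :: N') (-1) = C * 0 * peval Q (-1)).
      { apply (lim_unique_right (-1) (peval (a :: N')) (fun x => C * Rpower (1 + x) e * peval Q x)).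
        - apply (ev_right _ d _ Hd). intros y Hy. apply H; auto.
        - apply lim_cont_right, peval_continuous.
        - apply lim_mult_r; [apply lim_mult_r|]. apply lim_const_r. apply lim_Rpower0; lra.
          apply lim_cont_right, peval_continuous. }
      rewrite Rmult_0_r, Rmult_0_l in HN0.
      apply (IH (quo (-1) (a :: N')) ltac:(rewrite quo_length; simpl in Hl; lia) (e - 1) C d Q); auto.
      * intros z Hz. apply (He (z + 1)%Z). rewrite plus_IZR. simpl. lra.
      * intros x Hx. specialize (H x Hx). rewrite (quo_ok (-1)), HN0 in H.
        replace (x - -1) with (1 + x) in H by ring.
        replace e with ((e - 1) + 1) in H by ring.
        rewrite Rpower_plus, Rpower_1 in H by lra.
        apply Rmult_eq_reg_l with (1 + x); [|lra]. rewrite Rplus_0_l in H. rewrite H. ring.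
Qed.

Lemma der_mult (f g : R -> R) x df dg : is_derive f x df -> is_derive g x dg ->
  is_derive (fun t => f t * g t) x (df * g x + f x * dg).
Proof. intros H1 H2. apply (is_derive_mult f g x df dg H1 H2). intros; apply Rmult_comm. Qed.

Lemma der_plus (f g : R -> R) x df dg : is_derive f x df -> is_derive g x dg ->
  is_derive (fun t => f t + g t) x (df + dg).
Proof. intros H1 H2. apply (is_derive_plus f g x df dg H1 H2). Qed.

Lemma der_ext (f g : R -> R) x l l' : l = l' -> locally x (fun t => f t = g t) -> is_derive f x l -> is_derive g x l'.
Proof. intros -> H1 H2. eapply is_derive_ext_loc; eauto. Qed.

Lemma der_Rpower1 c x : -1 < x -> is_derive (fun y => Rpower (1 + y) c) x (c * Rpower (1 + x) (c - 1)).
Proof.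
  intros Hx.
  assert (H1 : is_derive (fun y => Rpower y c) (1 + x) (c * Rpower (1 + x) (c - 1))).
  { apply is_derive_Reals. apply derivable_pt_lim_power. lra. }
  assert (H2 : is_derive (fun y : R => 1 + y) x 1) by (auto_derive; [auto|ring]).
  pose proof (is_derive_comp (fun y => Rpower y c) (fun y => 1 + y) x _ _ H1 H2) as H.
  simpl in H. eapply der_ext; [|apply filter_forall; intros; reflexivity|exact H].
  unfold scal; simpl; unfold mult; simpl; ring.
Qed.

Fixpoint pf (a : nat) (b x : R) : R :=
  match a with
  | O => 1 / (b + 1)
  | S a' => (1 - x) ^ (S a') / (b + 1) + INR (S a') / (b + 1) * (1 + x) * pf a' (b + 1) x
  end.

Lemma pf_poly a : forall b, is_poly (pf a b).
Proof.
  induction a as [|a IH]; intros b; simpl.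
  - apply is_poly_const.
  - apply is_poly_plus.
    + apply (is_poly_mult (fun x => (1 - x) * (1 - x) ^ a) (fun _ => / (b + 1))).
      apply (is_poly_mult (fun x => 1 - x) (fun x => (1 - x) ^ a)).
      apply (is_poly_ext (fun x => 1 + (-1) * x)); [intros; ring|].
      apply is_poly_plus; [apply is_poly_const|apply is_poly_mult; [apply is_poly_const|apply is_poly_id]].
      apply is_poly_pow.
      apply (is_poly_ext (fun x => 1 + (-1) * x)); [intros; ring|].
      apply is_poly_plus; [apply is_poly_const|apply is_poly_mult; [apply is_poly_const|apply is_poly_id]].
      apply is_poly_const.
    + apply is_poly_mult; [|apply IH].
      apply is_poly_mult; [apply is_poly_const|].
      apply is_poly_plus; [apply is_poly_const|apply is_poly_id].
Qed.

Lemma noint_S b : (forall z, b <> IZR z) -> (forall z, b + 1 <> IZR z).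
Proof. intros H z Hz. apply (H (z - 1)%Z). rewrite minus_IZR. simpl. lra. Qed.

Lemma noint_ne b : (forall z, b <> IZR z) -> b + 1 <> 0.
Proof. intros H Hz. apply (H (-1)%Z). simpl. lra. Qed.

Lemma pf_derive a : forall b, (forall z, b <> IZR z) -> forall x, -1 < x ->
  is_derive (fun y => Rpower (1 + y) (b + 1) * pf a b y) x ((1 - x) ^ a * Rpower (1 + x) b).
Proof.
  induction a as [|a IH]; intros b Hb x Hx; pose proof (noint_ne b Hb) as Hb1.
  - simpl. pose proof (der_Rpower1 (b + 1) x Hx) as H.
    eapply der_ext; [|apply filter_forall; intros; reflexivity|].
    2: { apply (der_mult _ (fun _ => 1 / (b + 1))). exact H. apply is_derive_const. }
    simpl. replace (b + 1 - 1) with b by ring. unfold zero; simpl; field; auto.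
  - assert (Hloc : locally x (fun y =>
       (1 - y) ^ S a / (b + 1) * Rpower (1 + y) (b + 1) +
       INR (S a) / (b + 1) * (Rpower (1 + y) (b + 1 + 1) * pf a (b + 1) y) =
       Rpower (1 + y) (b + 1) * pf (S a) b y)).
    { exists (mkposreal (1 + x) ltac:(lra)). intros y Hy.
      unfold ball in Hy; simpl in Hy; unfold AbsRing_ball, abs, minus, plus, opp in Hy; simpl in Hy.
      apply Rabs_lt_between in Hy.
      change (pf (S a) b y) with ((1 - y) ^ (S a) / (b + 1) + INR (S a) / (b + 1) * (1 + y) * pf a (b + 1) y).
      rewrite (Rpower_plus (b + 1) 1), Rpower_1 by lra. ring. }
    eapply der_ext; [|exact Hloc|].
    2: { apply der_plus.
         - apply der_mult. 
           + apply (der_mult (fun y => (1 - y) ^ S a) (fun _ => / (b + 1))).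
             apply is_derive_pow. auto_derive; auto. apply is_derive_const.
           + apply der_Rpower1; auto.
         - apply is_derive_scal. apply IH; auto. apply noint_S; auto. }
    simpl. unfold zero; simpl. replace (b + 1 - 1) with b by ring.
    change (match a with 0%nat => 1 | S _ => INR a + 1 end) with (INR (S a)). field; auto.
Qed.

Lemma ball_R (x y e : R) : ball x e y <-> Rabs (y - x) < e.
Proof. unfold ball; simpl; unfold AbsRing_ball, abs, minus, plus, opp; simpl. tauto. Qed.

Lemma sup_exists (E : R -> Prop) B x0 : E x0 -> (forall x, E x -> x <= B) ->
  exists L, (forall x, E x -> x <= L) /\ (forall eps, 0 < eps -> exists x, E x /\ L - eps < x).
Proof.
  intros H0 HB.
  destruct (completeness E) as [L [HL1 HL2]].
  - exists B. intros x Hx. apply HB; auto.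
  - exists x0; auto.
  - exists L. split. intros; apply HL1; auto.
    intros eps He. apply NNPP. intros Hn.
    assert (L <= L - eps); [|lra].
    apply HL2. intros x Hx. apply Rnot_lt_le. intros Hlt. apply Hn. exists x; auto.
Qed.

Lemma sup_lim_right (G : R -> R) c d B : c < d ->
  (forall u v, c < u <= v -> v <= d -> G v <= G u) -> (forall u, c < u <= d -> G u <= B) ->
  exists L, (forall u, c < u <= d -> G u <= L) /\ filterlim G (at_right c) (locally L).
Proof.
  intros Hcd Hmon HB.
  destruct (sup_exists (fun y => exists u, c < u <= d /\ y = G u) B (G d)) as [L [HL1 HL2]].
  - exists d; split; auto; lra.
  - intros y [u [Hu ->]]; auto.
  - exists L; split.
    + intros u Hu. apply HL1. exists u; auto.
    + apply filterlim_locally. intros eps.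
      destruct (HL2 eps (cond_pos eps)) as [y [[u0 [Hu0 ->]] Hy]].
      apply (ev_right c (u0 - c)); [lra|]. intros u Hu.
      apply ball_R. 
      assert (G u0 <= G u) by (apply Hmon; lra).
      assert (G u <= L) by (apply HL1; exists u; split; auto; lra).
      apply Rabs_lt_between; lra.
Qed.

Lemma sup_lim_infty (H : R -> R) c B :
  (forall u v, c <= u <= v -> H u <= H v) -> (forall v, c <= v -> H v <= B) ->
  exists L, (forall v, c <= v -> H v <= L) /\ filterlim H (Rbar_locally p_infty) (locally L).
Proof.
  intros Hmon HB.
  destruct (sup_exists (fun y => exists v, c <= v /\ y = H v) B (H c)) as [L [HL1 HL2]].
  - exists c; split; auto; lra.
  - intros y [v [Hv ->]]; auto.
  - exists L; split.
    + intros v Hv. apply HL1. exists v; auto.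
    + apply filterlim_locally. intros eps.
      destruct (HL2 eps (cond_pos eps)) as [y [[v0 [Hv0 ->]] Hy]].
      exists v0. intros v Hv.
      apply ball_R.
      assert (H v0 <= H v) by (apply Hmon; lra).
      assert (H v <= L) by (apply HL1; exists v; split; auto; lra).
      apply Rabs_lt_between; lra.
Qed.

Lemma exp_mono x y : x <= y -> exp x <= exp y.
Proof. intros [H|H]; [left; apply exp_increasing; auto|subst; lra]. Qed.

Definition gf (s t : R) := Rpower t (s - 1) * exp (- t).

Lemma der_Rpower c t : 0 < t -> is_derive (fun y => Rpower y c) t (c * Rpower t (c - 1)).
Proof. intros; apply is_derive_Reals, derivable_pt_lim_power; auto. Qed.

Lemma cont_Rpower c t : 0 < t -> continuous (fun y => Rpower y c) t.
Proof. intros H. apply (ex_derive_continuous (K := R_AbsRing) (V := R_NormedModule) (fun y => Rpower y c)). eexists. apply der_Rpower; auto. Qed.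

Lemma cont_expm t : continuous (fun y => exp (- y)) t.
Proof. apply (ex_derive_continuous (K := R_AbsRing) (V := R_NormedModule) (fun y => exp (- y))). auto_derive; auto. Qed.

Lemma cont_gf s t : 0 < t -> continuous (gf s) t.
Proof.
  intros H. unfold gf. apply (continuous_mult (fun y => Rpower y (s - 1)) (fun y => exp (- y))).
  apply cont_Rpower; auto. apply cont_expm.
Qed.

Lemma gf_pos s t : 0 < gf s t.
Proof. unfold gf. apply Rmult_lt_0_compat; [apply Rpower_pos|apply exp_pos]. Qed.

Lemma ex_RInt_gf s u v : 0 < u -> 0 < v -> ex_RInt (gf s) u v.
Proof.
  intros Hu Hv. apply (ex_RInt_continuous (V := R_CompleteNormedModule)). intros z Hz. apply cont_gf.
  destruct Hz as [Hz _]. eapply Rlt_le_trans; [|exact Hz]. apply Rmin_case; auto.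
Qed.

Lemma RInt_der (f df : R -> R) a b :
  (forall x, Rmin a b <= x <= Rmax a b -> is_derive f x (df x)) ->
  (forall x, Rmin a b <= x <= Rmax a b -> continuous df x) ->
  is_RInt df a b (f b - f a).
Proof. intros H1 H2. apply (is_RInt_derive (V := R_CompleteNormedModule) f df a b H1 H2). Qed.

Lemma Rpower_1_l s : Rpower 1 s = 1.
Proof. unfold Rpower. rewrite ln_1, Rmult_0_r, exp_0. reflexivity. Qed.

Lemma int_pow s u : 0 < s -> 0 < u -> is_RInt (fun t => Rpower t (s - 1)) u 1 (1 / s - Rpower u s / s).
Proof.
  intros Hs Hu.
  replace (1 / s - Rpower u s / s) with (Rpower 1 s / s - Rpower u s / s).
  2: { rewrite Rpower_1_l. ring. }
  apply (RInt_der (fun y => Rpower y s / s)).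
  - intros x Hx. assert (0 < x) by (destruct Hx as [Hx _]; eapply Rlt_le_trans; [|exact Hx]; apply Rmin_case; lra).
    eapply der_ext; [|apply filter_forall; intros; reflexivity|].
    2: { apply (der_mult (fun y => Rpower y s) (fun _ => / s)). apply der_Rpower; auto. apply is_derive_const. }
    unfold zero; simpl. field. lra.
  - intros x Hx. apply cont_Rpower.
    destruct Hx as [Hx _]; eapply Rlt_le_trans; [|exact Hx]; apply Rmin_case; lra.
Qed.

Lemma ln_le_sqrt t : 1 <= t -> ln t <= 2 * sqrt t.
Proof.
  intros Ht.
  assert (Hs : 0 < sqrt t) by (apply sqrt_lt_R0; lra).
  assert (E : ln t = 2 * ln (sqrt t)).
  { rewrite <- (sqrt_sqrt t) at 1 by lra. rewrite ln_mult by auto. ring. }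
  pose proof (exp_ineq1_le (ln (sqrt t))) as H. rewrite exp_ln in H by auto. lra.
Qed.

Lemma ln_ge0 t : 1 <= t -> 0 <= ln t.
Proof. intros [H|H]. left. rewrite <- ln_1. apply ln_increasing; lra. subst; rewrite ln_1; lra. Qed.

Lemma gf_bound s t : 1 <= t -> gf s t <= exp (2 * (s - 1) ^ 2) * exp (- t / 2).
Proof.
  intros Ht. unfold gf, Rpower. rewrite <- !exp_plus. apply exp_mono.
  pose proof (ln_le_sqrt t Ht). pose proof (ln_ge0 t Ht).
  assert (Hs : 0 <= sqrt t) by apply sqrt_pos.
  assert (Hss : sqrt t * sqrt t = t) by (apply sqrt_sqrt; lra).
  assert ((s - 1) * ln t <= Rabs (s - 1) * ln t).
  { apply Rmult_le_compat_r; auto. apply RRle_abs. }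
  assert (Rabs (s - 1) * ln t <= Rabs (s - 1) * (2 * sqrt t)).
  { apply Rmult_le_compat_l; auto. apply Rabs_pos. }
  assert (Ha : Rabs (s - 1) * Rabs (s - 1) = (s - 1) ^ 2).
  { rewrite <- Rabs_mult. rewrite Rabs_pos_eq. ring. pose proof (Rle_0_sqr (s - 1)) as Hq; unfold Rsqr in Hq; lra. }
  assert (Hsq : 0 <= (sqrt t - 2 * Rabs (s - 1)) ^ 2) by (apply pow2_ge_0).
  assert (2 * Rabs (s - 1) * sqrt t <= t / 2 + 2 * (s - 1) ^ 2).
  { replace ((sqrt t - 2 * Rabs (s - 1)) ^ 2) with
      (sqrt t * sqrt t - 4 * (Rabs (s - 1) * sqrt t) + 4 * (Rabs (s - 1) * Rabs (s - 1))) in Hsq by ring.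
    rewrite Hss, Ha in Hsq. lra. }
  lra.
Qed.

Lemma int_expm K v : 1 <= v -> is_RInt (fun t => K * exp (- t / 2)) 1 v (2 * K * exp (- 1 / 2) - 2 * K * exp (- v / 2)).
Proof.
  intros Hv.
  replace (2 * K * exp (- 1 / 2) - 2 * K * exp (- v / 2)) with
    (- 2 * K * exp (- v / 2) - - 2 * K * exp (- 1 / 2)) by ring.
  apply (RInt_der (fun y => - 2 * K * exp (- y / 2))).
  - intros x _. auto_derive; auto. replace (exp (- x * / 2)) with (exp (- x / 2)) by reflexivity; field.
  - intros x _. apply (ex_derive_continuous (K := R_AbsRing) (V := R_NormedModule) (fun t => K * exp (- t / 2))). auto_derive; auto.
Qed.

Lemma RInt_split s u v w : 0 < u -> 0 < v -> 0 < w ->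
  RInt (gf s) u w = RInt (gf s) u v + RInt (gf s) v w.
Proof.
  intros. symmetry. apply (RInt_Chasles (V := R_CompleteNormedModule)); apply ex_RInt_gf; auto.
Qed.

Lemma RInt_gf_ge0 s u v : 0 < u <= v -> 0 <= RInt (gf s) u v.
Proof. intros. apply RInt_ge_0; try lra. apply ex_RInt_gf; lra. intros; left; apply gf_pos. Qed.

Lemma gen_left s : 0 < s -> exists L1, 0 < L1 /\ is_RInt_gen (gf s) (at_right 0) (at_point 1) L1.
Proof.
  intros Hs.
  destruct (sup_lim_right (fun u => RInt (gf s) u 1) 0 1 (1 / s)) as [L [HL1 HL2]].
  - lra.
  - intros u v Huv Hv. rewrite (RInt_split s u v 1) by lra.
    pose proof (RInt_gf_ge0 s u v ltac:(lra)). lra.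
  - intros u Hu.
    apply Rle_trans with (RInt (fun t => Rpower t (s - 1)) u 1).
    + apply RInt_le; try lra. apply ex_RInt_gf; lra.
      eexists; apply int_pow; lra.
      intros x Hx. unfold gf. rewrite <- (Rmult_1_r (Rpower x (s - 1))) at 2.
      apply Rmult_le_compat_l. left; apply Rpower_pos.
      rewrite <- exp_0. apply exp_mono. lra.
    + rewrite (is_RInt_unique _ _ _ _ (int_pow s u Hs ltac:(lra))).
      pose proof (Rpower_pos u s). assert (0 < Rpower u s / s) by (apply Rdiv_lt_0_compat; auto). lra.
  - exists L. split.
    + apply Rlt_le_trans with (RInt (gf s) (1/2) 1); [|apply HL1; lra].
      apply RInt_gt_0; [lra| intros; apply gf_pos|]. intros; apply cont_gf; lra.
    + apply filterlimi_lim_ext_loc with (f := fun ab => RInt (gf s) (fst ab) (snd ab)).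
      * apply Filter_prod with (Q := fun u => 0 < u) (R := fun v => v = 1).
        -- apply (ev_right 0 1); [lra|]. intros; lra.
        -- reflexivity.
        -- intros x y Hx Hy. simpl. apply (RInt_correct (V := R_CompleteNormedModule)). apply ex_RInt_gf; lra.
      * apply filterlim_locally. intros eps.
        pose proof (proj1 (filterlim_locally (F := at_right 0) _ L) HL2 eps) as HL3.
        apply Filter_prod with (Q := fun x => ball L eps (RInt (gf s) x 1)) (R := fun v => v = 1); [exact HL3| | ].
        -- reflexivity.
        -- intros x y Hx Hy. simpl. subst y. exact Hx.
Qed.

Lemma gen_right s : exists L2, 0 <= L2 /\ is_RInt_gen (gf s) (at_point 1) (Rbar_locally p_infty) L2.
Proof.
  set (K := exp (2 * (s - 1) ^ 2)).
  assert (HK : 0 < K) by apply exp_pos.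
  destruct (sup_lim_infty (fun v => RInt (gf s) 1 v) 1 (2 * K * exp (- 1 / 2))) as [L [HL1 HL2]].
  - intros u v Huv. rewrite (RInt_split s 1 u v) by lra.
    pose proof (RInt_gf_ge0 s u v ltac:(lra)). lra.
  - intros v Hv.
    apply Rle_trans with (RInt (fun t => K * exp (- t / 2)) 1 v).
    + apply RInt_le; try lra. apply ex_RInt_gf; lra.
      eexists; apply int_expm; lra.
      intros x Hx. apply gf_bound. lra.
    + rewrite (is_RInt_unique _ _ _ _ (int_expm K v Hv)).
      pose proof (exp_pos (- v / 2)). nra.
  - exists L. split.
    + apply Rle_trans with (RInt (gf s) 1 1); [|apply HL1; lra].
      rewrite RInt_point. unfold zero; simpl; lra.
    + apply filterlimi_lim_ext_loc with (f := fun ab => RInt (gf s) (fst ab) (snd ab)).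
      * apply Filter_prod with (Q := fun u => u = 1) (R := fun v => 0 < v).
        -- reflexivity.
        -- exists 0. intros; lra.
        -- intros x y Hx Hy. simpl. apply (RInt_correct (V := R_CompleteNormedModule)). apply ex_RInt_gf; lra.
      * apply filterlim_locally. intros eps.
        pose proof (proj1 (filterlim_locally (F := Rbar_locally p_infty) _ L) HL2 eps) as HL3.
        apply Filter_prod with (Q := fun u => u = 1) (R := fun x => ball L eps (RInt (gf s) 1 x)); [reflexivity|exact HL3|].
        intros x y Hx Hy. simpl. subst x. exact Hy.
Qed.

Lemma gf_int s : 0 < s -> exists L, 0 < L /\ is_RInt_gen (gf s) (at_right 0) (Rbar_locally p_infty) L.
Proof.
  intros Hs. destruct (gen_left s Hs) as [L1 [H1 G1]]. destruct (gen_right s) as [L2 [H2 G2]].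
  exists (L1 + L2). split; [lra|].
  apply (is_RInt_gen_Chasles (gf s) 1 L1 L2 G1 G2).
Qed.

Lemma GP_val s L : is_RInt_gen (gf s) (at_right 0) (Rbar_locally p_infty) L -> Gamma_pos s = L.
Proof. intros H. unfold Gamma_pos. apply (is_RInt_gen_unique (V := R_CompleteNormedModule) (gf s) L H). Qed.

Lemma GP_pos s : 0 < s -> 0 < Gamma_pos s.
Proof. intros Hs. destruct (gf_int s Hs) as [L [HL H]]. rewrite (GP_val s L H). auto. Qed.

Lemma lim_infty_0 (h : R -> R) K : (forall t, 1 <= t -> Rabs (h t) <= K * exp (- t / 2)) ->
  filterlim h (Rbar_locally p_infty) (locally 0).
Proof.
  intros H. apply filterlim_locally. intros eps.
  set (K' := Rabs K + 1).
  assert (HK' : 0 < K') by (unfold K'; pose proof (Rabs_pos K); lra).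
  assert (He : 0 < eps / K') by (apply Rdiv_lt_0_compat; [apply cond_pos|auto]).
  exists (Rmax 1 (- 2 * ln (eps / K'))). intros t Ht.
  apply ball_R. rewrite Rminus_0_r.
  pose proof (Rmax_l 1 (- 2 * ln (eps / K'))). pose proof (Rmax_r 1 (- 2 * ln (eps / K'))).
  assert (Ht1 : 1 <= t) by lra.
  assert (Ht2 : - 2 * ln (eps / K') < t) by lra.
  eapply Rle_lt_trans; [apply H; auto|].
  assert (exp (- t / 2) < eps / K').
  { rewrite <- (exp_ln (eps / K')) by auto. apply exp_increasing. lra. }
  assert (K <= K') by (unfold K'; pose proof (RRle_abs K); lra).
  pose proof (exp_pos (- t / 2)).
  apply Rle_lt_trans with (K' * exp (- t / 2)). apply Rmult_le_compat_r; lra.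
  replace (pos eps) with (K' * (eps / K')) by (field; lra).
  apply Rmult_lt_compat_l; auto.
Qed.

Lemma lim_Rpower_0 e : 0 < e -> filterlim (fun x => Rpower x e) (at_right 0) (locally 0).
Proof.
  intros He. apply filterlim_locally. intros eps.
  set (d := Rpower eps (/ e)).
  assert (Hd : 0 < d) by apply Rpower_pos.
  apply (ev_right _ d); auto. intros y Hy.
  apply ball_R. rewrite Rminus_0_r, Rabs_pos_eq by (left; apply Rpower_pos).
  replace (pos eps) with (Rpower d e).
  apply Rlt_Rpower_l; lra.
  unfold d. rewrite Rpower_mult. rewrite Rinv_l by lra.
  apply Rpower_1. apply cond_pos.
Qed.

Lemma GP_one : Gamma_pos 1 = 1.
Proof.
  apply GP_val.
  set (h := fun t => - exp (- t)).
  assert (Dh : forall t, is_derive h t (exp (- t))).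
  { intros t. unfold h. auto_derive; auto. ring. }
  assert (DH : Derive h = gf 1).
  { apply functional_extensionality. intros t. rewrite (is_derive_unique _ _ _ (Dh t)).
    unfold gf. replace (1 - 1) with 0 by ring. unfold Rpower. rewrite Rmult_0_l, exp_0. ring. }
  replace 1 with (0 - (-1)) at 2 by ring.
  rewrite <- DH.
  apply (is_RInt_gen_Derive (Fa := at_right 0) (Fb := Rbar_locally p_infty) h (-1) 0).
  - apply filter_forall. intros. eexists; apply Dh.
  - apply filter_forall. intros. rewrite DH.
    replace (gf 1) with (fun t => exp (- t)). apply cont_expm.
    apply functional_extensionality; intros t. unfold gf. replace (1 - 1) with 0 by ring. unfold Rpower. rewrite Rmult_0_l, exp_0. ring.
  - replace (-1) with (h 0) by (unfold h; rewrite Ropp_0, exp_0; ring).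
    apply lim_cont_right. apply (ex_derive_continuous (K := R_AbsRing) (V := R_NormedModule) h). eexists; apply Dh.
  - apply (lim_infty_0 h 1). intros t Ht. unfold h. rewrite Rabs_Ropp, Rabs_pos_eq by (left; apply exp_pos).
    rewrite Rmult_1_l. apply exp_mono. lra.
Qed.

Lemma pos_ev_left P : (forall x, 0 < x -> P x) -> at_right 0 P.
Proof. intros H. apply (ev_right 0 1); [lra|]. intros; apply H; lra. Qed.

Lemma pos_ev_right P : (forall x, 0 < x -> P x) -> Rbar_locally p_infty P.
Proof. intros H. exists 0. auto. Qed.

Lemma GP_rec s : 0 < s -> Gamma_pos (s + 1) = s * Gamma_pos s.
Proof.
  intros Hs.
  destruct (gf_int s Hs) as [L [HL HI]].
  rewrite (GP_val s L HI). apply GP_val.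
  set (h := fun t => Rpower t s * (- exp (- t))).
  assert (Dh : forall t, 0 < t -> is_derive h t (gf (s + 1) t - s * gf s t)).
  { intros t Ht. unfold h.
    eapply der_ext; [|apply filter_forall; intros; reflexivity|].
    2: { apply der_mult. apply der_Rpower; auto.
         auto_derive; auto. }
    cbv beta. unfold gf. replace (s + 1 - 1) with s by ring.
    match goal with |- ?a = ?b => change (@eq R a b) end. ring. }
  assert (DhE : forall t, 0 < t -> Derive h t = gf (s + 1) t - s * gf s t).
  { intros; apply is_derive_unique; auto. }
  assert (HD : is_RInt_gen (Derive h) (at_right 0) (Rbar_locally p_infty) (0 - 0)).
  { apply (is_RInt_gen_Derive (Fa := at_right 0) (Fb := Rbar_locally p_infty) h 0 0).
    - apply Filter_prod with (Q := fun a => 0 < a) (R := fun b => 0 < b).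
      apply pos_ev_left; auto. apply pos_ev_right; auto.
      intros a b Ha Hb x Hx. simpl in Hx.
      assert (0 < x) by (destruct Hx as [Hx _]; eapply Rlt_le_trans; [|exact Hx]; apply Rmin_case; auto).
      eexists; apply Dh; auto.
    - apply Filter_prod with (Q := fun a => 0 < a) (R := fun b => 0 < b).
      apply pos_ev_left; auto. apply pos_ev_right; auto.
      intros a b Ha Hb x Hx. simpl in Hx.
      assert (Hx0 : 0 < x) by (destruct Hx as [Hx _]; eapply Rlt_le_trans; [|exact Hx]; apply Rmin_case; auto).
      apply (continuous_ext_loc _ (fun t => gf (s + 1) t - s * gf s t)).
      + exists (mkposreal x Hx0). intros y Hy. apply ball_R in Hy. simpl in Hy.
        apply Rabs_lt_between in Hy. rewrite DhE; [reflexivity|]. change (minus y x) with (y - x) in Hy; lra.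
      + apply (continuous_plus (fun t => gf (s + 1) t) (fun t => - (s * gf s t))).
        apply cont_gf; auto.
        apply (continuous_opp (fun t => s * gf s t)).
        apply (continuous_mult (fun _ => s) (gf s)). apply continuous_const. apply cont_gf; auto.
    - assert (Hc : continuous (fun t => - exp (- t)) 0).
      { apply (ex_derive_continuous (K := R_AbsRing) (V := R_NormedModule) (fun t => - exp (- t))). auto_derive; auto. }
      pose proof (lim_mult_r 0 _ _ _ _ (lim_Rpower_0 s Hs) (lim_cont_right _ _ Hc)) as Hl.
      rewrite Rmult_0_l in Hl. exact Hl.
    - apply (lim_infty_0 h (exp (2 * (s + 1 - 1) ^ 2))). intros t Ht.
      unfold h. rewrite Rabs_mult, Rabs_Ropp, Rabs_pos_eq, (Rabs_pos_eq (exp _)) by (left; first [apply exp_pos|apply Rpower_pos]).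
      pose proof (gf_bound (s + 1) t Ht). unfold gf in H. replace (s + 1 - 1) with s in * by ring. auto. }
  pose proof (is_RInt_gen_plus (Fa := at_right 0) (Fb := Rbar_locally p_infty) _ _ _ _ HD
    (is_RInt_gen_scal (Fa := at_right 0) (Fb := Rbar_locally p_infty) _ s _ HI)) as HS.
  replace (s * L) with (plus (0 - 0) (scal s L)) by (unfold plus, scal; simpl; unfold mult; simpl; ring).
  eapply (is_RInt_gen_ext (Fa := at_right 0) (Fb := Rbar_locally p_infty)); [|exact HS].
  apply Filter_prod with (Q := fun a => 0 < a) (R := fun b => 0 < b).
  apply pos_ev_left; auto. apply pos_ev_right; auto.
  intros a b Ha Hb x Hx. simpl in Hx.
  assert (Hx0 : 0 < x) by (destruct Hx as [Hx _]; eapply Rle_lt_trans; [|exact Hx]; apply Rmin_case; lra).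
  rewrite DhE; auto. unfold plus, scal; simpl; unfold mult; simpl. ring.
Qed.

Definition prodx (x : R) (m : nat) := fold_right Rmult 1 (map (fun k => x + INR k) (seq 0 m)).

Lemma fold_mult_c c l : fold_right Rmult c l = fold_right Rmult 1 l * c.
Proof. induction l; simpl; [ring|]. rewrite IHl; ring. Qed.

Lemma prodx_S x m : prodx x (S m) = prodx x m * (x + INR m).
Proof.
  unfold prodx. rewrite seq_S, map_app, fold_right_app. simpl.
  rewrite fold_mult_c. ring.
Qed.

Lemma prodx_nz x m : (forall k : nat, x + INR k <> 0) -> prodx x m <> 0.
Proof.
  intros H; induction m. unfold prodx; simpl; lra.
  rewrite prodx_S. apply Rmult_integral_contrapositive; auto.
Qed.

Lemma prodx_shift x m : prodx x (S m) = x * prodx (x + 1) m.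
Proof.
  induction m. unfold prodx; simpl; ring.
  rewrite prodx_S, IHm, prodx_S, S_INR. ring.
Qed.

Definition Hg x m := Gamma_pos (x + INR m) / prodx x m.

Lemma Hg_S x m : 0 < x + INR m -> (forall k : nat, x + INR k <> 0) -> Hg x (S m) = Hg x m.
Proof.
  intros H1 H2. unfold Hg. rewrite prodx_S, S_INR.
  replace (x + (INR m + 1)) with ((x + INR m) + 1) by ring.
  rewrite GP_rec by auto. field. split; auto. apply prodx_nz; auto.
Qed.

Lemma Hg_const x m j : 0 < x + INR m -> (forall k : nat, x + INR k <> 0) -> Hg x (m + j) = Hg x m.
Proof.
  intros H1 H2. induction j. rewrite Nat.add_0_r; auto.
  rewrite Nat.add_succ_r, Hg_S; auto. rewrite plus_INR. pose proof (pos_INR j). lra.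
Qed.

Lemma GammaE x m : 0 < x + INR m -> (forall k : nat, x + INR k <> 0) -> Gamma x = Hg x m.
Proof.
  intros H1 H2.
  set (n := Z.to_nat (up (Rabs x))).
  assert (Hn : 0 < x + INR n).
  { unfold n. destruct (archimed (Rabs x)) as [A _].
    assert (0 <= up (Rabs x))%Z.
    { apply le_IZR. pose proof (Rabs_pos x). lra. }
    rewrite INR_IZR_INZ, Z2Nat.id by auto.
    pose proof (Rle_abs (- x)). rewrite Rabs_Ropp in H0. lra. }
  change (Gamma x) with (Hg x n).
  rewrite <- (Hg_const x n (m - n)) by auto.
  rewrite <- (Hg_const x m (n - m)) by auto.
  f_equal. lia.
Qed.

Lemma exists_m x : exists m, 0 < x + INR m.
Proof.
  exists (Z.to_nat (up (Rabs x))).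
  destruct (archimed (Rabs x)) as [A _].
  assert (0 <= up (Rabs x))%Z.
  { apply le_IZR. pose proof (Rabs_pos x). lra. }
  rewrite INR_IZR_INZ, Z2Nat.id by auto.
  pose proof (Rle_abs (- x)). rewrite Rabs_Ropp in H0. lra.
Qed.

Lemma Gamma_rec x : (forall k : nat, x + INR k <> 0) -> Gamma (x + 1) = x * Gamma x.
Proof.
  intros H.
  destruct (exists_m x) as [m Hm].
  assert (H' : forall k : nat, x + 1 + INR k <> 0).
  { intros k. rewrite Rplus_assoc, (Rplus_comm 1), <- S_INR. auto. }
  rewrite (GammaE (x + 1) m) by (auto; lra).
  rewrite (GammaE x (S m)) by (auto; rewrite S_INR; lra).
  unfold Hg. rewrite prodx_shift, S_INR.
  replace (x + (INR m + 1)) with (x + 1 + INR m) by ring.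
  pose proof (H 0%nat). simpl in H0. rewrite Rplus_0_r in H0.
  field. split; auto. apply prodx_nz; auto.
Qed.

Lemma Gamma_nz x : (forall k : nat, x + INR k <> 0) -> Gamma x <> 0.
Proof.
  intros H. destruct (exists_m x) as [m Hm].
  rewrite (GammaE x m) by auto. unfold Hg.
  pose proof (GP_pos _ Hm). pose proof (prodx_nz x m H).
  unfold Rdiv. apply Rmult_integral_contrapositive. split; [lra|]. apply Rinv_neq_0_compat; auto.
Qed.

Lemma Gamma_1 : Gamma 1 = 1.
Proof.
  rewrite (GammaE 1 0). unfold Hg, prodx. simpl. rewrite Rplus_0_r, GP_one. field.
  simpl; lra. intros k. pose proof (pos_INR k). lra.
Qed.

Lemma noint_k b : (forall z, b <> IZR z) -> forall k : nat, b + 1 + INR k <> 0.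
Proof.
  intros H k Hk. apply (H (- (1 + Z.of_nat k))%Z).
  rewrite opp_IZR, plus_IZR, <- INR_IZR_INZ. simpl. lra.
Qed.

Lemma nat_k a : forall k : nat, INR a + 1 + INR k <> 0.
Proof. intros k. pose proof (pos_INR a). pose proof (pos_INR k). lra. Qed.

Lemma nu_0 b : (forall z, b <> IZR z) -> nu 0 b = Rpower 2 (b + 1) / (b + 1).
Proof.
  intros Hb. unfold nu. simpl INR. rewrite Rplus_0_l, Gamma_1.
  replace (0 + b + 2) with ((b + 1) + 1) by ring.
  rewrite (Gamma_rec (b + 1)) by (apply noint_k; auto).
  replace (1 + 0 + b) with (b + 1) by ring.
  pose proof (Gamma_nz (b + 1) (noint_k b Hb)). pose proof (noint_ne b Hb).
  field. auto.
Qed.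

Lemma nu_S a b : (forall z, b <> IZR z) -> nu (S a) b = INR (S a) / (b + 1) * nu a (b + 1).
Proof.
  intros Hb. unfold nu. rewrite S_INR.
  replace (INR a + 1 + 1) with ((INR a + 1) + 1) by ring.
  rewrite (Gamma_rec (INR a + 1)) by apply nat_k.
  rewrite (Gamma_rec (b + 1)) by (apply noint_k; auto).
  replace (1 + (INR a + 1) + b) with (1 + INR a + (b + 1)) by ring.
  replace (INR a + 1 + b + 2) with (INR a + (b + 1) + 2) by ring.
  assert (Hd : Gamma (INR a + (b + 1) + 2) <> 0).
  { apply Gamma_nz. intros k. replace (INR a + (b + 1) + 2 + INR k) with (b + 1 + INR (a + 2 + k)).
    apply noint_k; auto. rewrite !plus_INR. simpl. ring. }
  pose proof (noint_ne b Hb).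
  field. auto.
Qed.

Lemma value_nu a : forall b, (forall z, b <> IZR z) -> Rpower 2 (b + 1) * pf a b 1 = nu a b.
Proof.
  induction a as [|a IH]; intros b Hb.
  - rewrite nu_0 by auto. simpl. unfold Rdiv. ring.
  - rewrite nu_S by auto. rewrite <- IH by (apply noint_S; auto).
    change (pf (S a) b 1) with ((1 - 1) ^ (S a) / (b + 1) + INR (S a) / (b + 1) * (1 + 1) * pf a (b + 1) 1).
    rewrite (Rpower_plus (b + 1) 1), Rpower_1 by lra.
    simpl pow. unfold Rdiv. ring.
Qed.

Theorem mainTheorem15 (a : nat) (b : R) (hb : forall z : Z, b <> IZR z) :
  (exists P Q : list R, antideriv_rep a b P Q) /\
  (forall P Q : list R, antideriv_rep a b P Q -> rho_of P Q b 1 = nu a b).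
Proof.
  destruct (pf_poly a b) as [P0 HP0].
  split.
  - exists P0, (1 :: nil). split; [simpl; lra|]. split; [simpl; lra|].
    intros x Hx _.
    eapply der_ext; [reflexivity| |apply (pf_derive a b hb x); lra].
    apply filter_forall. intros y. unfold rho_of. rewrite HP0. simpl. f_equal. field.
  - intros P Q [HQ1 [HQm1 HD]].
    assert (Hcont := peval_continuous Q (-1)).
    assert (Heps : 0 < Rabs (peval Q (-1))) by (apply Rabs_pos_lt; auto).
    destruct (proj1 (filterlim_locally (F := locally (-1)) (peval Q) (peval Q (-1))) Hcont (mkposreal _ Heps)) as [d0 Hd0].
    set (d := Rmin d0 1).
    assert (Hd : 0 < d) by (unfold d; apply Rmin_case; [apply cond_pos|lra]).
    assert (HQnz : forall x, -1 < x < -1 + d -> peval Q x <> 0).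
    { intros x Hx HQx. assert (Hb := Hd0 x). 
      assert (ball (-1) d0 x).
      { apply ball_R. rewrite Rabs_pos_eq by lra. pose proof (Rmin_l d0 1). fold d in H. lra. }
      specialize (Hb H). apply ball_R in Hb. simpl in Hb. rewrite HQx in Hb.
      pose proof (proj1 (ball_R _ _ _) Hb) as Hb2. rewrite Rminus_0_l, Rabs_Ropp in Hb2. lra. }
    assert (Hd1 : d <= 1) by (unfold d; apply Rmin_r).
    set (D := fun x => rho_of P Q b x - Rpower (1 + x) (b + 1) * pf a b x).
    assert (HDd : forall x, -1 < x < -1 + d -> is_derive D x 0).
    { intros x Hx. unfold D.
      eapply der_ext; [| apply filter_forall; intros; reflexivity|].
      2: { apply (is_derive_minus (K := R_AbsRing) (V := R_NormedModule)).
           apply HD; [lra| apply HQnz; auto]. apply pf_derive; auto; lra. }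
      unfold minus, plus, opp; simpl. ring. }
    set (x0 := -1 + d / 2).
    assert (Hconst : forall x, -1 < x < -1 + d -> D x = D x0).
    { intros x Hx.
      destruct (MVT_gen D x0 x (fun _ => 0)) as [c [_ Hc]].
      - intros y Hy. apply HDd. unfold x0 in *.
        revert Hy. apply Rmin_case_strong; apply Rmax_case_strong; intros; lra.
      - intros y Hy. apply continuity_pt_filterlim.
        apply (ex_derive_continuous (K := R_AbsRing) (V := R_NormedModule) D).
        eexists. apply HDd. unfold x0 in *.
        revert Hy. apply Rmin_case_strong; apply Rmax_case_strong; intros; lra.
      - lra. }
    assert (HN : is_poly (fun x => peval P x + (-1) * (pf a b x * peval Q x))).
    { apply is_poly_plus. exists P; auto. apply is_poly_mult. apply is_poly_const.
      apply is_poly_mult. apply pf_poly. exists Q; auto. }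
    destruct HN as [N HN].
    assert (HNe : forall x, -1 < x < -1 + d -> peval N x = D x0 * Rpower (1 + x) (- (b + 1)) * peval Q x).
    { intros x Hx. rewrite <- HN, <- (Hconst x Hx). unfold D, rho_of.
      pose proof (HQnz x Hx). rewrite Rpower_Ropp.
      assert (Rpower (1 + x) (b + 1) <> 0) by (apply Rgt_not_eq, Rpower_pos).
      field. auto. }
    assert (HC : D x0 = 0).
    { apply (nonrat_aux (length N) N (le_n _) (- (b + 1)) (D x0) d Q); auto.
      intros z Hz. apply (hb (- z - 1)%Z). rewrite minus_IZR, opp_IZR. simpl. lra. }
    assert (HN0 : forall x, peval N x = 0).
    { apply (poly_zero_interval N (-1) (-1 + d)). lra.
      intros x Hx. rewrite HNe, HC by auto. ring. }
    specialize (HN 1). rewrite HN0 in HN.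
    unfold rho_of. rewrite <- value_nu by auto.
    replace (1 + 1) with 2 by ring. f_equal.
    field_simplify_eq; auto. lra.
Qed.
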